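(* $\mathrm{AAut}_{\mathbb Z}(L)=\mathrm{Isom}_{\mathbb Z}(L)$.
   Context: $\mathbb F$ is a field of characteristic zero, $\mathfrak{sl}_2$ the Lie algebra of $2\times2$ trace-zero matrices over $\mathbb F$ with trace form $(u,v)=\mathrm{tr}(uv)$. Equitable basis: $x=\begin{pmatrix}1&0\\0&-1\end{pmatrix}$, $y=\begin{pmatrix}-1&2\\0&1\end{pmatrix}$, $z=\begin{pmatrix}-1&0\\-2&1\end{pmatrix}$, and $L=\mathbb Zx\oplus\mathbb Zy\oplus\mathbb Zz$. An antiautomorphism of $\mathfrak{sl}_2$ is an $\mathbb F$-linear bijection $\phi$ with $\phi([u,v])=[\phi(v),\phi(u)]$. $\mathrm{AAut}_{\mathbb Z}(L)$ is the group of all automorphisms and antiautomorphisms $\varphi$ of $\mathfrak{sl}_2$ with $\varphi(L)=L$. An isometry is an $\mathbb F$-linear bijection of $\mathfrak{sl}_2$ preserving the trace form; $\mathrm{Isom}_{\mathbb Z}(L)$ is the group of isometries $\varphi$ with $\varphi(L)=L$. *)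

(* Defs.v *)
From HB Require Import structures.
From mathcomp Require Import all_boot all_order all_algebra.
Set Implicit Arguments. Unset Strict Implicit. Unset Printing Implicit Defensive.
Import GRing.Theory.
Local Open Scope ring_scope.

Section SL2.
Variable F : fieldType.

Definition mx2 (a b c d : F) : 'M[F]_2 :=
  \matrix_(i < 2, j < 2)
    if i == 0 then (if j == 0 then a else b) else (if j == 0 then c else d).

Definition sl2 : pred 'M[F]_2 := fun u => \tr u == 0.

Definition lie (u v : 'M[F]_2) : 'M[F]_2 := u *m v - v *m u.
Definition trform (u v : 'M[F]_2) : F := \tr (u *m v).

Definition ex : 'M[F]_2 := mx2 1 0 0 (-1).
Definition ey : 'M[F]_2 := mx2 (-1) 2 0 1.
Definition ez : 'M[F]_2 := mx2 (-1) 0 (-2) 1.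

Definition inL (u : 'M[F]_2) : Prop :=
  exists a b c : int, u = a%:~R *: ex + b%:~R *: ey + c%:~R *: ez.

(* phi is an F-linear bijection of sl_2 (values off sl_2 are irrelevant) *)
Definition lin_bij_sl2 (phi : 'M[F]_2 -> 'M[F]_2) : Prop :=
  [/\ (forall (a : F) u v, u \in sl2 -> v \in sl2 -> phi (a *: u + v) = a *: phi u + phi v),
      {in sl2, forall u, phi u \in sl2},
      {in sl2 &, injective phi} &
      (forall v, v \in sl2 -> exists2 u, u \in sl2 & phi u = v)].

Definition is_aut (phi : 'M[F]_2 -> 'M[F]_2) : Prop :=
  {in sl2 &, forall u v, phi (lie u v) = lie (phi u) (phi v)}.

Definition is_antiaut (phi : 'M[F]_2 -> 'M[F]_2) : Prop :=
  {in sl2 &, forall u v, phi (lie u v) = lie (phi v) (phi u)}.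

Definition is_isom (phi : 'M[F]_2 -> 'M[F]_2) : Prop :=
  {in sl2 &, forall u v, trform (phi u) (phi v) = trform u v}.

Definition preservesL (phi : 'M[F]_2 -> 'M[F]_2) : Prop :=
  (forall u, inL u -> inL (phi u)) /\ (forall v, inL v -> exists u, inL u /\ phi u = v).

Definition in_AAutZ (phi : 'M[F]_2 -> 'M[F]_2) : Prop :=
  lin_bij_sl2 phi /\ (is_aut phi \/ is_antiaut phi) /\ preservesL phi.

Definition in_IsomZ (phi : 'M[F]_2 -> 'M[F]_2) : Prop :=
  lin_bij_sl2 phi /\ is_isom phi /\ preservesL phi.

End SL2.

(* Main.v *)
Require Import Defs.
From HB Require Import structures.
From mathcomp Require Import all_boot all_order all_algebra.
From Stdlib Require Import Ring.
Import GRing.Theory.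
Local Open Scope ring_scope.

Section Work.
Variable F : fieldType.
Notation T := (GRing.PzSemiRing.sort (GRing_Field__to__GRing_PzSemiRing F)).
Lemma Fring : @ring_theory T 0 1 +%R *%R (fun x y => x - y) -%R eq.
Proof.
split=> *. exact: add0r. exact: addrC. exact: addrA. exact: mul1r. exact: mulrC.
exact: mulrA. exact: mulrDl. by []. exact: subrr.
Qed.
Add Ring Fr : Fring.
Lemma two : (2%:R : F) = 1 + 1. Proof. by rewrite mulr2n. Qed.
Ltac normF :=
  rewrite ?two;
  repeat match goal with |- context [@Algebra.add ?s] =>
    lazymatch s with GRing_PzSemiRing__to__Algebra_BaseAddMagma (GRing_Field__to__GRing_PzSemiRing F) => fail | _ =>
    change (@Algebra.add s) with (@Algebra.add (GRing_PzSemiRing__to__Algebra_BaseAddMagma (GRing_Field__to__GRing_PzSemiRing F))) end end;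
  repeat match goal with |- context [@Algebra.opp ?s] =>
    lazymatch s with GRing_Field__to__Algebra_BaseZmodule F => fail | _ =>
    change (@Algebra.opp s) with (@Algebra.opp (GRing_Field__to__Algebra_BaseZmodule F)) end end;
  repeat match goal with |- context [@Algebra.zero ?s] =>
    lazymatch s with GRing_PzSemiRing__to__Algebra_BaseAddUMagma (GRing_Field__to__GRing_PzSemiRing F) => fail | _ =>
    change (@Algebra.zero s) with (@Algebra.zero (GRing_PzSemiRing__to__Algebra_BaseAddUMagma (GRing_Field__to__GRing_PzSemiRing F))) end end;
  repeat match goal with |- context [@GRing.mul ?s] =>
    lazymatch s with GRing_Field__to__GRing_PzSemiRing F => fail | _ =>
    change (@GRing.mul s) with (@GRing.mul (GRing_Field__to__GRing_PzSemiRing F)) end end;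
  repeat match goal with |- context [@GRing.one ?s] =>
    lazymatch s with GRing_Field__to__GRing_PzSemiRing F => fail | _ =>
    change (@GRing.one s) with (@GRing.one (GRing_Field__to__GRing_PzSemiRing F)) end end.
Lemma mul1_eq (x y : F) : 1 * x = 1 * y -> x = y. Proof. by rewrite !mul1r. Qed.
Ltac fring := apply: mul1_eq; normF; ring.

Notation M2 := 'M[F]_2.
Lemma mx2E (M : M2) : M = mx2 (M 0 0) (M 0 1) (M 1 0) (M 1 1).
Proof.
apply/matrixP=> i j; rewrite mxE.
by case: i => [[|[|//]] ?]; case: j => [[|[|//]] ?]; congr (M _ _); apply: val_inj.
Qed.
Lemma mx2_00 a b c d : mx2 a b c d 0 0 = a :> F. Proof. by rewrite mxE. Qed.
Lemma mx2_01 a b c d : mx2 a b c d 0 1 = b :> F. Proof. by rewrite mxE. Qed.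
Lemma mx2_10 a b c d : mx2 a b c d 1 0 = c :> F. Proof. by rewrite mxE. Qed.
Lemma mx2_11 a b c d : mx2 a b c d 1 1 = d :> F. Proof. by rewrite mxE. Qed.
Lemma mx2_inj a b c d a' b' c' d' : mx2 a b c d = mx2 a' b' c' d' :> M2 ->
  [/\ a = a', b = b', c = c' & d = d'].
Proof.
move=> H; split.
- by rewrite -(mx2_00 a b c d) H mx2_00.
- by rewrite -(mx2_01 a b c d) H mx2_01.
- by rewrite -(mx2_10 a b c d) H mx2_10.
- by rewrite -(mx2_11 a b c d) H mx2_11.
Qed.
Lemma mx2_congr a b c d a' b' c' d' : a = a' -> b = b' -> c = c' -> d = d' ->
  mx2 a b c d = mx2 a' b' c' d' :> M2.
Proof. by move=> -> -> -> ->. Qed.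
Lemma mx2_mul a b c d e f g h :
  mx2 a b c d *m mx2 e f g h = mx2 (a*e+b*g) (a*f+b*h) (c*e+d*g) (c*f+d*h) :> M2.
Proof.
apply/matrixP=> i j; rewrite !mxE !big_ord_recr big_ord0 /= add0r !mxE.
by case: i => [[|[|//]] ?]; case: j => [[|[|//]] ?].
Qed.
Lemma mx2_add a b c d e f g h :
  mx2 a b c d + mx2 e f g h = mx2 (a+e) (b+f) (c+g) (d+h) :> M2.
Proof.
apply/matrixP=> i j; rewrite !mxE.
by case: i => [[|[|//]] ?]; case: j => [[|[|//]] ?].
Qed.
Lemma mx2_scale k a b c d : k *: mx2 a b c d = mx2 (k*a) (k*b) (k*c) (k*d) :> M2.
Proof.
apply/matrixP=> i j; rewrite !mxE.
by case: i => [[|[|//]] ?]; case: j => [[|[|//]] ?].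
Qed.
Lemma mx2_opp a b c d : - mx2 a b c d = mx2 (-a) (-b) (-c) (-d) :> M2.
Proof.
apply/matrixP=> i j; rewrite !mxE.
by case: i => [[|[|//]] ?]; case: j => [[|[|//]] ?].
Qed.
Lemma mx2_zero : 0 = mx2 0 0 0 0 :> M2.
Proof.
apply/matrixP=> i j; rewrite !mxE.
by case: i => [[|[|//]] ?]; case: j => [[|[|//]] ?].
Qed.
Lemma mx2_tr a b c d : \tr (mx2 a b c d : M2) = a + d.
Proof. by rewrite /mxtrace !big_ord_recr big_ord0 /= add0r !mxE. Qed.

Ltac mxpush := rewrite /lie /trform; repeat (rewrite mx2_mul || rewrite mx2_opp || rewrite mx2_add || rewrite mx2_scale || rewrite mx2_tr).
Ltac mxring := mxpush; (apply: mx2_congr; fring) || fring.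

Lemma sl2E (u : M2) : u \in (@sl2 F) -> u = mx2 (u 0 0) (u 0 1) (u 1 0) (- u 0 0).
Proof.
rewrite unfold_in /sl2 {1}[u]mx2E mx2_tr addrC addr_eq0 => /eqP H.
by rewrite {1}[u]mx2E H.
Qed.
Lemma in_sl2 p q r : mx2 p q r (-p) \in (@sl2 F).
Proof. by rewrite unfold_in /sl2 mx2_tr subrr. Qed.
Lemma lie_sl2 (u v : M2) : lie u v \in (@sl2 F).
Proof. by rewrite unfold_in /sl2 /lie mxtraceD linearN /= mxtrace_mulC subrr. Qed.

Lemma sl2Z k (u : M2) : u \in (@sl2 F) -> k *: u \in (@sl2 F).
Proof. by rewrite !unfold_in /sl2 mxtraceZ => /eqP ->; rewrite mulr0. Qed.

Lemma lieD (u v w : M2) : u \in (@sl2 F) -> v \in (@sl2 F) -> w \in (@sl2 F) ->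
  lie (lie u v) w = (2 * trform v w) *: u - (2 * trform u w) *: v.
Proof. move=> /sl2E -> /sl2E -> /sl2E ->; mxring. Qed.
Lemma lieN (b c : M2) : b \in (@sl2 F) -> c \in (@sl2 F) ->
  trform (lie b c) (lie b c) = 2 * (trform b c * trform b c) - 2 * (trform b b * trform c c).
Proof. move=> /sl2E -> /sl2E ->; mxring. Qed.
Lemma lieO1 (b c : M2) : trform (lie b c) b = 0.
Proof. rewrite [b]mx2E [c]mx2E; mxring. Qed.
Lemma lieO2 (b c : M2) : trform (lie b c) c = 0.
Proof. rewrite [b]mx2E [c]mx2E; mxring. Qed.
Lemma lie_anti (u v : M2) : lie u v = - lie v u.
Proof. rewrite [u]mx2E [v]mx2E; mxring. Qed.
Lemma tfC (u v : M2) : trform u v = trform v u.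
Proof. exact: mxtrace_mulC. Qed.
Lemma lie_combo (a b c : M2) x1 x2 x3 y1 y2 y3 :
  lie (x1*:a+x2*:b+x3*:c) (y1*:a+y2*:b+y3*:c) =
  (x1*y2-x2*y1)*:lie a b + (x1*y3-x3*y1)*:lie a c + (x2*y3-x3*y2)*:lie b c.
Proof. rewrite [a]mx2E [b]mx2E [c]mx2E; mxring. Qed.
Lemma tf_combo (a b c : M2) x1 x2 x3 y1 y2 y3 :
  trform (x1*:a+x2*:b+x3*:c) (y1*:a+y2*:b+y3*:c) =
  x1*y1*trform a a + x1*y2*trform a b + x1*y3*trform a c
  + x2*y1*trform b a + x2*y2*trform b b + x2*y3*trform b c
  + x3*y1*trform c a + x3*y2*trform c b + x3*y3*trform c c.
Proof. rewrite [a]mx2E [b]mx2E [c]mx2E; mxring. Qed.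

Section Phi.
Variable h2 : (2%:R : F) != 0.
Variable phi : M2 -> M2.
Hypothesis Hlin : lin_bij_sl2 phi.
Definition E : M2 := mx2 1 0 0 (-1).
Definition Fb : M2 := mx2 0 1 0 0.
Definition G : M2 := mx2 0 0 1 0.
Local Notation a := (phi E).
Local Notation b := (phi Fb).
Local Notation c := (phi G).

Lemma phiL k (u v : M2) : u \in (@sl2 F) -> v \in (@sl2 F) -> phi (k *: u + v) = k *: phi u + phi v.
Proof. by case: Hlin => H _ _ _; exact: H. Qed.

Lemma zero_sl2 : (0 : M2) \in (@sl2 F).
Proof. by rewrite mx2_zero -[X in mx2 _ _ _ X]oppr0 in_sl2. Qed.

Lemma phi0 : phi 0 = 0.
Proof.
have Hl := phiL.
have H := Hl 1 0 0 zero_sl2 zero_sl2; rewrite scale1r addr0 scale1r in H.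
apply: (addrI (phi 0)); rewrite addr0; exact: esym.
Qed.

Lemma phiZ k u : u \in (@sl2 F) -> phi (k *: u) = k *: phi u.
Proof.
move=> Hu; have Hl := phiL.
by have := Hl k u 0 Hu zero_sl2; rewrite !addr0 phi0 addr0.
Qed.

Lemma phi_mx2 p q r : phi (mx2 p q r (-p)) = p *: a + q *: b + r *: c.
Proof.
have Hl := phiL.
have -> : mx2 p q r (-p) = p *: E + (q *: Fb + r *: G) by rewrite /E /Fb /G; mxring.
have S1 : q *: Fb + r *: G \in (@sl2 F).
  have -> : q *: Fb + r *: G = mx2 0 q r (-0) by rewrite /Fb /G; mxring.
  exact: in_sl2.
have SE : E \in (@sl2 F) by exact: in_sl2.
have SF : Fb \in (@sl2 F) by rewrite /Fb -[X in mx2 _ _ _ X]oppr0 in_sl2.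
have SG : G \in (@sl2 F) by rewrite /G -[X in mx2 _ _ _ X]oppr0 in_sl2.
rewrite Hl // Hl //. rewrite (phiZ r G SG) addrA //. exact: sl2Z.
Qed.

Lemma phi_dec u : u \in (@sl2 F) -> phi u = u 0 0 *: a + u 0 1 *: b + u 1 0 *: c.
Proof. by move=> /sl2E {1}->; rewrite phi_mx2. Qed.

Lemma abc_sl2 : [/\ a \in (@sl2 F), b \in (@sl2 F) & c \in (@sl2 F)].
Proof.
case: Hlin => _ Hs _ _; split; apply: Hs.
- exact: in_sl2.
- by rewrite /Fb -[X in mx2 _ _ _ X]oppr0 in_sl2.
- by rewrite /G -[X in mx2 _ _ _ X]oppr0 in_sl2.
Qed.

Lemma indep x y z : x *: a + y *: b + z *: c = 0 -> [/\ x = 0, y = 0 & z = 0].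
Proof.
case: Hlin => _ _ Hi _.
rewrite -phi_mx2 -phi0 => /Hi.
move=> /(_ (in_sl2 _ _ _) zero_sl2); rewrite mx2_zero => /mx2_inj [-> -> -> _].
by [].
Qed.

Lemma span w : w \in (@sl2 F) -> exists x y z, w = x *: a + y *: b + z *: c.
Proof.
case: Hlin => _ _ _ Hs /Hs [u Hu <-].
by exists (u 0 0), (u 0 1), (u 1 0); rewrite phi_dec.
Qed.


Lemma from_eq (X Y : M2) x y z : X = Y -> x *: a + y *: b + z *: c = X - Y ->
  [/\ x = 0, y = 0 & z = 0].
Proof. by move=> -> H; apply: indep; rewrite H subrr. Qed.

Lemma lieZl k (u v : M2) : lie (k *: u) v = k *: lie u v.
Proof. rewrite [u]mx2E [v]mx2E; mxring. Qed.
Lemma lieZr k (u v : M2) : lie u (k *: v) = k *: lie u v.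
Proof. rewrite [u]mx2E [v]mx2E; mxring. Qed.

Lemma half (x y : F) : 2 * x = 2 * y -> x = y.
Proof. exact: (mulfI h2). Qed.

Lemma sub0_eq (x y : F) : x - y = 0 -> x = y.
Proof. by move/eqP; rewrite subr_eq0 => /eqP. Qed.

Lemma solve2 (x y e1 e2 k : F) : e1 = 0 -> e2 = 0 -> 2 * x - 2 * y = e1 + k * e2 -> x = y.
Proof. move=> -> ->; rewrite mulr0 addr0 => /sub0_eq; exact: half. Qed.

Lemma gram_of s : s * s = 1 -> lie a b = (2 * s) *: b -> lie a c = (- (2 * s)) *: c ->
  lie b c = s *: a ->
  trform a a = 2 /\ trform b b = 0 /\ trform c c = 0 /\
      trform a b = 0 /\ trform a c = 0 /\ trform b c = 1.
Proof.
move=> hs R1 R2 R3.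
have [Sa Sb Sc] := abc_sl2.
have E1 := lieD b c b Sb Sc Sb; rewrite R3 lieZl R1 scalerA in E1.
have E2 := lieD b c c Sb Sc Sc; rewrite R3 lieZl R2 scalerA in E2.
have E3 := lieD a b a Sa Sb Sa; rewrite R1 lieZl (lie_anti b a) R1 scalerN scalerA in E3.
have E4 := lieD a c a Sa Sc Sa; rewrite R2 lieZl (lie_anti c a) R2 scalerN scalerA in E4.
have [_ h12 h13] := from_eq _ _ (0) ( s * (2 * s) - 2 * trform c b) ( 2 * trform b b) E1
  (ltac:(rewrite [a]mx2E [b]mx2E [c]mx2E; mxring)).
have [_ h22 h23] := from_eq _ _ (0) ( - 2 * trform c c) ( s * - (2 * s) + 2 * trform b c) E2
  (ltac:(rewrite [a]mx2E [b]mx2E [c]mx2E; mxring)).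
have [h31 h32 _] := from_eq _ _ ( - 2 * trform b a) ( - (2 * s * (2 * s)) + 2 * trform a a) ( 0) E3
  (ltac:(rewrite [a]mx2E [b]mx2E [c]mx2E; mxring)).
have [h41 _ h43] := from_eq _ _ ( - 2 * trform c a) ( 0) ( - (- (2 * s) * - (2 * s)) + 2 * trform a a) E4
  (ltac:(rewrite [a]mx2E [b]mx2E [c]mx2E; mxring)).
have hs' : s * s - 1 = 0 by rewrite hs subrr.
split; first by apply: (@solve2 _ _ _ _ (2*2) h32 hs'); fring.
split; first by apply: (@solve2 _ _ _ _ 0 h13 hs'); fring.
split; first by apply/esym; apply: (@solve2 _ _ _ _ 0 h22 hs'); fring.
split; first by rewrite tfC; apply/esym; apply: (@solve2 _ _ _ _ 0 h31 hs'); fring.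
split; first by rewrite tfC; apply/esym; apply: (@solve2 _ _ _ _ 0 h41 hs'); fring.
by rewrite tfC; apply/esym; apply: (@solve2 _ _ _ _ (-2) h12 hs'); fring.
Qed.


Lemma lie_mx2 p q r p' q' r' : lie (mx2 p q r (-p)) (mx2 p' q' r' (-p')) =
  mx2 (q * r' - r * q') (2 * (p * q' - q * p')) (2 * (r * p' - p * r')) (- (q * r' - r * q')) :> M2.
Proof. mxring. Qed.

Lemma SE : E \in (@sl2 F). Proof. exact: in_sl2. Qed.
Lemma SF : Fb \in (@sl2 F). Proof. by rewrite /Fb -[X in mx2 _ _ _ X]oppr0 in_sl2. Qed.
Lemma SG : G \in (@sl2 F). Proof. by rewrite /G -[X in mx2 _ _ _ X]oppr0 in_sl2. Qed.

Lemma rels_of s : s * s = 1 ->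
  (forall u v, u \in (@sl2 F) -> v \in (@sl2 F) -> phi (lie u v) = s *: lie (phi u) (phi v)) ->
  [/\ lie a b = (2 * s) *: b, lie a c = (- (2 * s)) *: c & lie b c = s *: a].
Proof.
move=> hs H.
have H1 := H E Fb SE SF.
have H2 := H E G SE SG.
have H3 := H Fb G SF SG.
have e1 : lie E Fb = 2 *: Fb by rewrite /E /Fb; mxring.
rewrite e1 in H1.
have e2 : lie E G = (-2) *: G by rewrite /E /G; mxring.
rewrite e2 in H2.
have e3 : lie Fb G = E by rewrite /E /Fb /G; mxring.
rewrite e3 in H3.
rewrite phiZ in H1; last exact: SF.
rewrite phiZ in H2; last exact: SG.
split.
- have -> : lie a b = (s * s) *: lie a b by rewrite hs scale1r.
  by rewrite -scalerA -H1 scalerA mulrC.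
- have -> : lie a c = (s * s) *: lie a c by rewrite hs scale1r.
  rewrite -scalerA -H2 scalerA; congr (_ *: _); fring.
- by rewrite H3 scalerA hs scale1r.
Qed.

Lemma final_shape (a' b' c' : M2) k1 k2 k3 t y z : y = 2 * k1 -> z = - (2 * k2) ->
  k1 *: ((2 * t) *: b') + k2 *: ((- (2 * t)) *: c') + k3 *: (t *: a') =
  t *: (k3 *: a' + y *: b' + z *: c').
Proof. move=> -> ->; rewrite [a']mx2E [b']mx2E [c']mx2E; mxring. Qed.

Lemma phi_lie t : lie a b = (2 * t) *: b -> lie a c = (- (2 * t)) *: c -> lie b c = t *: a ->
  forall u v, u \in (@sl2 F) -> v \in (@sl2 F) -> lie (phi u) (phi v) = t *: phi (lie u v).
Proof.
move=> R1 R2 R3 u v Hu Hv.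
move: (u 0 0) (u 0 1) (u 1 0) (sl2E u Hu) => p q r ->.
move: (v 0 0) (v 0 1) (v 1 0) (sl2E v Hv) => p' q' r' ->.
rewrite lie_mx2 (phi_mx2 p q r) (phi_mx2 p' q' r').
rewrite (phi_mx2 (q * r' - r * q') (2 * (p * q' - q * p')) (2 * (r * p' - p * r'))).
rewrite lie_combo R1 R2 R3.
by apply: final_shape; fring.
Qed.


Lemma sl2B (u v : M2) k : u \in (@sl2 F) -> v \in (@sl2 F) -> u - k *: v \in (@sl2 F).
Proof.
rewrite !unfold_in /sl2 => /eqP hu /eqP hv.
by rewrite mxtraceD linearN /= mxtraceZ hu hv mulr0 subrr.
Qed.

Lemma tf_sub (n a' w : M2) k : trform (n - k *: a') w = trform n w - k * trform a' w.
Proof. rewrite [n]mx2E [a']mx2E [w]mx2E; mxring. Qed.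

Lemma tf_lin2 (m a' b' c' : M2) x y z :
  trform m (x *: a' + y *: b' + z *: c') = x * trform m a' + y * trform m b' + z * trform m c'.
Proof. rewrite [m]mx2E [a']mx2E [b']mx2E [c']mx2E; mxring. Qed.

Lemma tfZZ k (u : M2) : trform (k *: u) (k *: u) = k * k * trform u u.
Proof. rewrite [u]mx2E; mxring. Qed.

Lemma perp0 (m : M2) : m \in (@sl2 F) -> trform m E = 0 -> trform m Fb = 0 -> trform m G = 0 -> m = 0.
Proof.
move=> Hm; move: (m 0 0) (m 0 1) (m 1 0) (sl2E m Hm) => p q r ->.
have -> : trform (mx2 p q r (-p)) E = 2 * p by rewrite /E; mxring.
have -> : trform (mx2 p q r (-p)) Fb = r by rewrite /Fb; mxring.
have -> : trform (mx2 p q r (-p)) G = q by rewrite /G; mxring.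
move=> hp -> ->.
have -> : p = 0 by apply: half; rewrite hp mulr0.
by rewrite oppr0 mx2_zero.
Qed.

Lemma subr0_eqM (x y : M2) : x - y = 0 -> x = y.
Proof. by move/eqP; rewrite subr_eq0 => /eqP. Qed.

Lemma rels_from_gram :
  trform a a = 2 -> trform b b = 0 -> trform c c = 0 ->
  trform a b = 0 -> trform a c = 0 -> trform b c = 1 ->
  exists2 t, t * t = 1 &
  [/\ lie a b = (2 * t) *: b, lie a c = (- (2 * t)) *: c & lie b c = t *: a].
Proof.
move=> Gaa Gbb Gcc Gab Gac Gbc.
have [Sa Sb Sc] := abc_sl2.
have Sn : lie b c \in (@sl2 F) := lie_sl2 b c.
pose t := trform (lie b c) a / 2.
have Sm : lie b c - t *: a \in (@sl2 F) by apply: sl2B.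
have hma : trform (lie b c - t *: a) a = 0 by rewrite tf_sub Gaa /t divfK // subrr.
have hmb : trform (lie b c - t *: a) b = 0 by rewrite tf_sub lieO1 Gab mulr0 subrr.
have hmc : trform (lie b c - t *: a) c = 0 by rewrite tf_sub lieO2 Gac mulr0 subrr.
have hmw : forall w, w \in (@sl2 F) -> trform (lie b c - t *: a) w = 0.
  move=> w /span [x [y [z ->]]].
  by rewrite tf_lin2 hma hmb hmc !mulr0 !addr0.
have hn : lie b c = t *: a.
  by apply: subr0_eqM; apply: perp0 => //; apply: hmw; [exact: SE | exact: SF | exact: SG].
have htt : t * t = 1.
  have e := lieN b c Sb Sc.
  rewrite {1 2}hn tfZZ Gaa Gbc Gbb Gcc in e.
  have e' : t * t * 2 - (2 * (1 * 1) - 2 * (0 * 0)) = 0 by rewrite e subrr.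
  by apply: (@solve2 _ _ _ _ 0 e' e'); fring.
exists t => //.
have E1 := lieD b c b Sb Sc Sb.
have E2 := lieD b c c Sb Sc Sc.
rewrite hn lieZl (tfC c b) Gbc Gbb in E1.
rewrite hn lieZl Gcc Gbc in E2.
split => //.
- have -> : lie a b = (t * t) *: lie a b by rewrite htt scale1r.
  rewrite -scalerA E1 [b]mx2E [c]mx2E; mxring.
- have -> : lie a c = (t * t) *: lie a c by rewrite htt scale1r.
  rewrite -scalerA E2 [b]mx2E [c]mx2E; mxring.
Qed.

Lemma dir1 : (is_aut phi \/ is_antiaut phi) -> is_isom phi.
Proof.
move=> Haa.
have [s hs H] : exists2 s, s * s = 1 &
    forall u v, u \in (@sl2 F) -> v \in (@sl2 F) -> phi (lie u v) = s *: lie (phi u) (phi v).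
  case: Haa => Ha; [exists 1 | exists (-1)].
  - exact: mulr1.
  - by move=> x y Hx Hy; rewrite (Ha x y Hx Hy) scale1r.
  - by rewrite mulrNN mulr1.
  - by move=> x y Hx Hy; rewrite (Ha x y Hx Hy) lie_anti scaleN1r.
have [R1 R2 R3] := rels_of s hs H.
have [Gaa [Gbb [Gcc [Gab [Gac Gbc]]]]] := gram_of s hs R1 R2 R3.
move=> u v Hu Hv.
move: (u 0 0) (u 0 1) (u 1 0) (sl2E u Hu) => p q r ->.
move: (v 0 0) (v 0 1) (v 1 0) (sl2E v Hv) => p' q' r' ->.
rewrite (phi_mx2 p q r) (phi_mx2 p' q' r') tf_combo (tfC b a) (tfC c a) (tfC c b).
rewrite Gaa Gbb Gcc Gab Gac Gbc.
mxring.
Qed.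

Lemma dir2 : is_isom phi -> is_aut phi \/ is_antiaut phi.
Proof.
move=> Hi.
have Gaa : trform a a = 2 by rewrite (Hi E E SE SE) /E; mxring.
have Gbb : trform b b = 0 by rewrite (Hi Fb Fb SF SF) /Fb; mxring.
have Gcc : trform c c = 0 by rewrite (Hi G G SG SG) /G; mxring.
have Gab : trform a b = 0 by rewrite (Hi E Fb SE SF) /E /Fb; mxring.
have Gac : trform a c = 0 by rewrite (Hi E G SE SG) /E /G; mxring.
have Gbc : trform b c = 1 by rewrite (Hi Fb G SF SG) /Fb /G; mxring.
have [t htt [R1 R2 R3]] := rels_from_gram Gaa Gbb Gcc Gab Gac Gbc.
have PL := phi_lie t R1 R2 R3.
have : (t - 1) * (t + 1) = t * t - 1 by fring.
rewrite htt subrr => /eqP; rewrite mulf_eq0 => /orP [/eqP /sub0_eq ht | ].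
- left=> u v Hu Hv.
  by rewrite (PL u v Hu Hv) ht scale1r.
- rewrite addr_eq0 => /eqP ht.
  right=> u v Hu Hv.
  rewrite (PL v u Hv Hu) ht (lie_anti u v) -scaleN1r phiZ //; exact: lie_sl2.
Qed.

End Phi.
End Work.

Theorem theorem5p5 (F : fieldType) (charF0 : [pchar F] =i pred0)
    (phi : 'M[F]_2 -> 'M[F]_2) :
  in_AAutZ phi <-> in_IsomZ phi.
Proof.
have h2 : (2%:R : F) != 0 by rewrite ((pcharf0P F).1 charF0).
split.
- move=> [Hl [Ha Hp]]; split => //; split => //.
  exact: (@dir1 F h2 phi Hl Ha).
- move=> [Hl [Hi Hp]]; split => //; split => //.
  exact: (@dir2 F h2 phi Hl Hi).
Qed.
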